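(* All connected graphs on at least three vertices are reconstructible if and only if all connected graphs $G$ on at least three vertices with $\gamma(G)=2$ or $\operatorname{diam}(G)=\operatorname{diam}(\overline{G})=2$ are reconstructible.
   Context: All graphs are finite, simple and undirected. $\gamma(G)$ denotes the domination number, $\operatorname{diam}(G)$ the diameter (infinite if $G$ is disconnected), and $\overline{G}$ the complement of $G$. For a vertex $v$, the card $G-v$ is the unlabeled graph obtained by deleting $v$; the deck $\mathscr{D}(G)$ is the multiset of all cards of $G$ up to isomorphism. $G$ is reconstructible if every graph $H$ with $\mathscr{D}(H)=\mathscr{D}(G)$ is isomorphic to $G$. *)

(* Defs.v *)
From mathcomp Require Import all_boot.
Set Implicit Arguments. Unset Strict Implicit. Unset Printing Implicit Defensive.

Record sgraph := SGraph {
  vert :> finType;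
  adj : rel vert;
  adj_sym : symmetric adj;
  adj_irr : irreflexive adj }.

Definition iso (G H : sgraph) : Prop :=
  exists f : G -> H, bijective f /\ forall x y, adj (f x) (f y) = adj x y.

Section Card.
Variables (G : sgraph) (v : G).
Definition card_vert : finType := {x : G | x != v}.
Definition card_adj : rel card_vert := fun x y => adj (val x) (val y).
Lemma card_adj_sym : symmetric card_adj.
Proof. by move=> x y; rewrite /card_adj adj_sym. Qed.
Lemma card_adj_irr : irreflexive card_adj.
Proof. by move=> x; rewrite /card_adj adj_irr. Qed.
Definition card_graph : sgraph := SGraph card_adj_sym card_adj_irr.
End Card.

(* Equal decks (as multisets of cards up to isomorphism): there is a
   bijection between the vertex sets matching each card of G with an
   isomorphic card of H. *)
Definition same_deck (G H : sgraph) : Prop :=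
  exists s : G -> H, bijective s /\ forall v, iso (card_graph v) (card_graph (s v)).

Definition reconstructible (G : sgraph) : Prop :=
  forall H : sgraph, same_deck G H -> iso G H.

Section Compl.
Variable G : sgraph.
Definition compl_adj : rel G := fun x y => (x != y) && ~~ adj x y.
Lemma compl_adj_sym : symmetric compl_adj.
Proof. by move=> x y; rewrite /compl_adj eq_sym adj_sym. Qed.
Lemma compl_adj_irr : irreflexive compl_adj.
Proof. by move=> x; rewrite /compl_adj eqxx. Qed.
Definition compl : sgraph := SGraph compl_adj_sym compl_adj_irr.
End Compl.

Definition connected (G : sgraph) : Prop := forall x y : G, connect (@adj G) x y.

Definition dominating (G : sgraph) (D : {set G}) : bool :=
  [forall v, (v \in D) || [exists u in D, adj u v]].

(* Domination number: minimum size of a dominating set (V itself dominates). *)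
Definition gamma (G : sgraph) : nat :=
  \big[minn/#|G|]_(D : {set G} | dominating D) #|D|.

Definition within (G : sgraph) (k : nat) (x y : G) : Prop :=
  exists p : seq G, [/\ path (@adj G) x p, last x p = y & size p <= k].

(* diam(G) = d : d is the least k such that every pair is within distance k
   (if G is disconnected no such k exists: diameter infinite). *)
Definition diam_is (G : sgraph) (d : nat) : Prop :=
  (forall x y : G, within d x y) /\
  (forall k, k < d -> ~ (forall x y : G, within k x y)).

(* Main.v *)
Require Import Defs.
From Stdlib Require Import Classical.
From mathcomp Require Import all_boot.
From mathcomp Require Import zify.
Set Implicit Arguments. Unset Strict Implicit. Unset Printing Implicit Defensive.

Lemma iso_refl (G : sgraph) : iso G G.
Proof. by exists id; split => //; exists id. Qed.

Lemma iso_sym (G H : sgraph) : iso G H -> iso H G.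
Proof.
case=> f [[g fK gK] Hf]; exists g; split; first by exists f.
by move=> x y; rewrite -Hf !gK.
Qed.

Lemma iso_trans (G H K : sgraph) : iso G H -> iso H K -> iso G K.
Proof.
case=> f [bf Hf] [g [bg Hg]]; exists (g \o f); split; first exact: bij_comp.
by move=> x y /=; rewrite Hg Hf.
Qed.

Lemma iso_compl (G H : sgraph) : iso G H -> iso (compl G) (compl H).
Proof.
case=> f [bf Hf]; exists f; split => // x y /=.
by rewrite /compl_adj Hf (inj_eq (bij_inj bf)).
Qed.

Lemma iso_compl_compl (G : sgraph) : iso G (compl (compl G)).
Proof.
exists id; split; first by exists id.
move=> x y /=; rewrite /compl_adj /= /compl_adj /=.
case: eqP => [->|/eqP ne] /=; first by rewrite adj_irr.
by rewrite negbK.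
Qed.

Lemma iso_card_compl (G : sgraph) (v : G) :
  iso (card_graph (v : compl G)) (compl (card_graph v)).
Proof.
exists id; split; first by exists id.
by move=> x y /=; rewrite /card_adj /compl_adj /=.
Qed.

Lemma same_deck_compl (G H : sgraph) : same_deck G H -> same_deck (compl G) (compl H).
Proof.
case=> s [bs Hs]; exists s; split => // v.
apply: iso_trans (iso_card_compl _) _.
apply: iso_trans (iso_compl (Hs v)) _.
exact: iso_sym (iso_card_compl _).
Qed.

Lemma recon_compl (G : sgraph) : reconstructible (compl G) -> reconstructible G.
Proof.
move=> R H /same_deck_compl /R /iso_compl I.
apply: iso_trans (iso_compl_compl G) _.
apply: iso_trans I _; exact: iso_sym (iso_compl_compl H).
Qed.

Definition deg (G : sgraph) (x : G) : nat := \sum_(y : G) adj x y.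
Definition DD (G : sgraph) : nat := \sum_(x : G) deg x.

Lemma sum_card (G : sgraph) (v : G) (F : G -> nat) :
  \sum_(x : card_vert v) F (val x) = \sum_(x | x != v) F x.
Proof.
rewrite (reindex_omap (val : card_vert v -> G) insub); last first.
  by move=> i Pi; rewrite insubT.
by apply: eq_bigl=> -[i iA]/=; rewrite insubT ?iA /= eqxx.
Qed.

Lemma DD_split (G : sgraph) (v : G) : DD G = DD (card_graph v) + 2 * deg v.
Proof.
rewrite {1}/DD (bigD1 v) //=.
have E1 : \sum_(x | x != v) deg x =
   \sum_(x | x != v) (adj x v : nat) + \sum_(x | x != v) \sum_(y | y != v) (adj x y : nat).
  rewrite -big_split /=; apply: eq_bigr => x _; rewrite /deg (bigD1 v) //.
have E2 : \sum_(x | x != v) (adj x v : nat) = deg v.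
  rewrite /deg [RHS](bigD1 v) //= adj_irr add0n; apply: eq_bigr => x _; by rewrite adj_sym.
have E3 : DD (card_graph v) = \sum_(x | x != v) \sum_(y | y != v) (adj x y : nat).
  rewrite /DD /deg /= -(@sum_card G v (fun x => \sum_(y | y != v) (adj x y : nat))).
  apply: eq_bigr => x _; rewrite -(@sum_card G v (fun y => (adj (val x) y : nat))) //.
rewrite E1 E2 E3; lia.
Qed.

Lemma DD_iso (G H : sgraph) : iso G H -> DD G = DD H.
Proof.
case=> f [bf Hf]; rewrite /DD /deg (reindex f) /=; last exact: onW_bij.
apply: eq_bigr => x _; rewrite (reindex f) /=; last exact: onW_bij.
by apply: eq_bigr => y _; rewrite Hf.
Qed.

Lemma sum_DD (G : sgraph) : \sum_(v : G) DD (card_graph v) + 2 * DD G = #|G| * DD G.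
Proof.
have -> : 2 * DD G = \sum_(v : G) 2 * deg v by rewrite /DD big_distrr.
rewrite -big_split /=.
rewrite (eq_bigr (fun _ => DD G)); last by move=> v _; rewrite -DD_split.
by rewrite sum_nat_const.
Qed.

Lemma iso_extend (G H : sgraph) (v : G) (w : H) :
  (forall y, ~~ adj v y) -> (forall y, ~~ adj w y) ->
  iso (card_graph v) (card_graph w) -> iso G H.
Proof.
move=> iv iw [f [[g fK gK] Hf]].
pose F (x : G) : H := if @insub G (fun x => x != v) (card_vert v) x is Some x' then val (f x') else w.
pose Gi (y : H) : G := if @insub H (fun y => y != w) (card_vert w) y is Some y' then val (g y') else v.
have Fv : F v = w by rewrite /F insubF // eqxx.
have Fx : forall x' : card_vert v, F (val x') = val (f x') by move=> x'; rewrite /F valK.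
have Gw : Gi w = v by rewrite /Gi insubF // eqxx.
have Gy : forall y' : card_vert w, Gi (val y') = val (g y') by move=> y'; rewrite /Gi valK.
exists F; split.
  exists Gi.
    move=> x; case: (@insubP G (fun x => x != v) (card_vert v) x) => [x' _ <-|].
      by rewrite Fx Gy fK.
    by rewrite negbK => /eqP ->; rewrite Fv Gw.
  move=> y; case: (@insubP H (fun y => y != w) (card_vert w) y) => [y' _ <-|].
    by rewrite Gy Fx gK.
  by rewrite negbK => /eqP ->; rewrite Gw Fv.
move=> x y.
case: (@insubP G (fun x => x != v) (card_vert v) x) => [x' _ <-|]; last first.
  rewrite negbK => /eqP ->; rewrite Fv (negbTE (iv y)); exact: negbTE (iw _).
case: (@insubP G (fun x => x != v) (card_vert v) y) => [y' _ <-|]; last first.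
  rewrite negbK => /eqP ->; rewrite Fv adj_sym (negbTE (iw _)) adj_sym.
  by rewrite (negbTE (iv _)).
rewrite !Fx; exact: Hf.
Qed.

Lemma recon_isolated (G : sgraph) (v : G) :
  3 <= #|G| -> (forall y, ~~ adj v y) -> reconstructible G.
Proof.
move=> n3 iv H [s [bs Hs]].
have cGH := bij_eq_card bs.
have DGH : DD G = DD H.
  have e1 := sum_DD G; have e2 := sum_DD H.
  have e3 : \sum_(u : G) DD (card_graph u) = \sum_(w : H) DD (card_graph w).
    rewrite [RHS](reindex s) /=; last exact: onW_bij.
    by apply: eq_bigr => u _; apply: DD_iso (Hs u).
  rewrite -cGH in e2.
  have : (#|G| - 2) * DD G = (#|G| - 2) * DD H by nia.
  by move/eqP; rewrite eqn_pmul2l ?subn_gt0 // => /eqP.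
have degv : deg v = 0 by rewrite /deg big1 // => y _; rewrite (negbTE (iv y)).
have degw : deg (s v) = 0.
  have := DD_split v; have := DD_split (s v); rewrite (DD_iso (Hs v)) degv; lia.
have iw : forall y, ~~ adj (s v) y.
  by move=> y; apply/negP => a; move: degw; rewrite /deg (bigD1 y) //= a.
exact: iso_extend iv iw (Hs v).
Qed.

Lemma bigmin_seq (I : eqType) (r : seq I) (P : pred I) (F : I -> nat) m x :
  x \in r -> P x -> \big[minn/m]_(i <- r | P i) F i <= F x.
Proof.
elim: r => // a r IH; rewrite inE big_cons; case/orP => [/eqP <- Px|xr Px].
  by rewrite Px geq_minl.
case: (P a); last exact: IH.
exact: leq_trans (geq_minr _ _) (IH xr Px).
Qed.

Lemma gamma_le (G : sgraph) (D : {set G}) : dominating D -> gamma G <= #|D|.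
Proof. by move=> dD; rewrite /gamma; apply: bigmin_seq => //; exact: mem_index_enum. Qed.

Lemma dom2E (K : sgraph) (a b : K) :
  dominating [set a; b] <-> forall z, [|| z == a, z == b, adj a z | adj b z].
Proof.
split.
  move/forallP => H z; move: (H z); rewrite !inE.
  case/orP => [/orP[->|->]|/existsP [u /andP[]]]; rewrite ?orbT //.
  by rewrite !inE => /orP[]/eqP-> ->; rewrite !orbT.
move=> H; apply/forallP => z; move: (H z); rewrite !inE.
case/or4P => [->|/eqP->|a'|b']; rewrite ?eqxx ?orbT //.
  by apply/orP; right; apply/existsP; exists a; rewrite !inE eqxx a'.
by apply/orP; right; apply/existsP; exists b; rewrite !inE eqxx b' orbT.
Qed.

Lemma gamma2 (G : sgraph) (a b : G) : a != b -> dominating [set a; b] ->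
  (forall u, exists z, z != u /\ ~~ @adj G u z) -> gamma G = 2.
Proof.
move=> ab dab nd; apply/eqP; rewrite eqn_leq; apply/andP; split.
  by have := gamma_le dab; rewrite cards2 ab.
have n2 : 2 <= #|G|.
  by have := max_card [set a; b]; rewrite cards2 ab.
rewrite /gamma; apply: (big_ind (fun x => 2 <= x)) => //.
  by move=> x y; rewrite leq_min => -> ->.
move=> D dD; rewrite leqNgt; apply/negP => lt.
have [D0|D1] : (#|D| == 0) \/ (#|D| == 1) by lia.
  move: D0; rewrite cards_eq0 => /eqP D0; move: dD; rewrite D0.
  move/forallP/(_ a); rewrite inE /=; case/existsP => u; by rewrite inE.
case/cards1P: D1 => u Du; move: dD; rewrite Du; case: (nd u) => z [zu nuz].
move/forallP/(_ z); rewrite inE (negbTE zu) /=; case/existsP => u'.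
by rewrite inE => /andP[/eqP -> ]; rewrite (negbTE nuz).
Qed.

Lemma dom2_connected (K : sgraph) (a b : K) : adj a b ->
  (forall z, [|| z == a, z == b, adj a z | adj b z]) -> connected K.
Proof.
move=> ab H.
have ca : forall z, connect (@adj K) a z.
  move=> z; case/or4P: (H z) => [/eqP->|/eqP->|e|e].
  - exact: connect0.
  - exact: connect1.
  - exact: connect1.
  - exact: connect_trans (connect1 ab) (connect1 e).
move=> x y; apply: connect_trans (ca y); rewrite (sym_connect_sym (@adj_sym K)); exact: ca.
Qed.

Lemma no_iso (G : sgraph) : connected G -> 2 <= #|G| -> forall u : G, exists z, adj u z.
Proof.
move=> cG n2 u.
have : 0 < #|predC1 u| by rewrite cardC1; lia.
case/card_gt0P => z; rewrite !inE => zu.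
case/connectP: (cG u z) => -[|z' p] /=.
  by move=> _ zE; rewrite zE eqxx in zu.
by case/andP => a _ _; exists z'.
Qed.

Lemma within1_adj (G : sgraph) (x y : G) : within 1 x y -> x != y -> adj x y.
Proof.
case=> p [P L S] xy; move: p P L S => [|z [|t q]] //=.
  by move=> _ E; rewrite E eqxx in xy.
by rewrite andbT => a <-.
Qed.

Lemma within_mono (G : sgraph) k k' (x y : G) : k <= k' -> within k x y -> within k' x y.
Proof. by move=> kk [p [P L S]]; exists p; split => //; apply: leq_trans S kk. Qed.

Lemma not_within2 (G : sgraph) (x y : G) : ~ within 2 x y ->
  [/\ x != y, ~~ adj x y & forall z, ~~ (adj x z && adj z y)].
Proof.
move=> nw; split.
- by apply/negP => /eqP E; apply: nw; exists [::]; rewrite E.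
- by apply/negP => a; apply: nw; exists [:: y]; rewrite /= a.
- move=> z; apply/negP => /andP[a b]; apply: nw; exists [:: z; y]; by rewrite /= a b.
Qed.

Theorem theorem5 :
  (forall G : sgraph, 3 <= #|G| -> connected G -> reconstructible G) <->
  (forall G : sgraph, 3 <= #|G| -> connected G ->
     (gamma G = 2 \/ (diam_is G 2 /\ diam_is (compl G) 2)) ->
     reconstructible G).
Proof.
split; first by move=> H G n3 cG _; exact: H.
move=> HP G n3 cG.
have n2 : 2 <= #|G| by lia.
have noi := no_iso cG n2.
case: (boolP [exists u : G, [forall z : G, (z != u) ==> adj u z]]).
  case/existsP => u /forallP Hu.
  apply: recon_compl; apply: (@recon_isolated (compl G) u) => // y.
  apply/negP => /andP[ne na]; move: (Hu y); by rewrite eq_sym ne (negbTE na).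
rewrite negb_exists => /forallP nd0.
have nd : forall u : G, exists z : G, z != u /\ ~~ adj u z.
  move=> u; move: (nd0 u); rewrite negb_forall => /existsP [z].
  by rewrite negb_imply => /andP[]; exists z.
case: (boolP [exists a : G, [exists b : G, (a != b) && dominating [set a; b]]]).
  case/existsP => a /existsP [b /andP[ab dab]].
  by apply: HP => //; left; exact: gamma2 dab nd.
rewrite negb_exists => /forallP np0.
have np : forall a b : G, a != b -> ~ dominating [set a; b].
  move=> a b ab dab; move: (np0 a); rewrite negb_exists => /forallP/(_ b).
  by rewrite ab dab.
case: (classic (forall x y : G, within 2 x y)) => [W1|]; last first.
  move=> /not_all_ex_not [x /not_all_ex_not [y /not_within2 [xy nxy nz]]].
  apply: recon_compl; apply: HP => //.
    have cxy : compl_adj x y by rewrite /compl_adj xy nxy.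
    apply: (@dom2_connected (compl G) x y) => // z.
    rewrite /= /compl_adj.
    case: (eqVneq z x) => //= zx; case: (eqVneq z y) => //= zy.
    by move: (nz z); rewrite negb_and [@adj G z y]adj_sym; case/orP => ->; rewrite ?orbT.
  left; apply: (@gamma2 (compl G) x y) => //.
    apply/dom2E => z; rewrite /= /compl_adj.
    case: (eqVneq z x) => //= zx; case: (eqVneq z y) => //= zy.
    by move: (nz z); rewrite negb_and [@adj G z y]adj_sym; case/orP => ->; rewrite ?orbT.
  move=> u; case: (noi u) => z a; exists z; split.
    by apply/negP => /eqP E; rewrite E adj_irr in a.
  by rewrite /= /compl_adj negb_and negbK a orbT.
case: (classic (forall x y : compl G, within 2 x y)) => [W2|]; last first.
  move=> /not_all_ex_not [x /not_all_ex_not [y /not_within2 [xy nxy nz]]].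
  exfalso; apply: (np x y xy); apply/dom2E => z.
  case: (eqVneq z x) => //= zx; case: (eqVneq z y) => //= zy.
  move: (nz z); rewrite /= /compl_adj negb_and eq_sym zx /= negb_and zy /= !negbK.
  by rewrite [@adj G z y]adj_sym; case/orP => ->; rewrite ?orbT.
apply: HP => //; right; split; split => // k lt2 Hall.
  have H1 : forall x y : G, within 1 x y by move=> x y; apply: within_mono (Hall x y); lia.
  case: (nd (xchoose (no_iso cG n2 (enum_val (Ordinal (leq_trans (isT : 0 < 3) n3)))) )) => z [zu nuz].
  by rewrite (within1_adj (H1 _ z)) // eq_sym in nuz.
have H1 : forall x y : compl G, within 1 x y by move=> x y; apply: within_mono (Hall x y); lia.
pose u : G := enum_val (Ordinal (leq_trans (isT : 0 < 3) n3)).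
case: (noi u) => z a.
have zu : u != z by apply/negP => /eqP E; rewrite E adj_irr in a.
have := within1_adj (H1 u z) zu.
by rewrite /= /compl_adj a andbF.
Qed.
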